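(* Let $\mathcal{T}$ be a transition system that contains no unsafe transitions (i.e., no transition whose target location is $\mathsf{err}$), and let the ADCL-NT calculus $\leadsto_\mathsf{nt}$ be instantiated with an arbitrary acceleration technique $\mathsf{accel}$. If $\mathcal{T} \leadsto_\mathsf{nt}^* \mathsf{unsafe}$, then $\mathcal{T}$ does not terminate.
   Context: Basic setting. $\mathcal{V}$ is a countably infinite set of variables and $\mathcal{A}$ is a first-order theory over a many-sorted signature $\Sigma_\mathcal{A}$ with carrier $\mathcal{C}_\mathcal{A}$. $\mathsf{QF}(\Sigma_\mathcal{A})$ is the set of quantifier-free formulas (in negation normal form) over $\Sigma_\mathcal{A}$; $\mathsf{QF}_\land(\Sigma_\mathcal{A})$ is the set of conjunctions of literals. $\sigma \models_\mathcal{A} \eta$ means $\sigma$ is a model of $\mathcal{A}$ with carrier $\mathcal{C}_\mathcal{A}$ extended by an interpretation of the variables satisfying $\eta$; $\eta \equiv_\mathcal{A} \eta'$ means $\models_\mathcal{A} \eta \leftrightarrow \eta'$; $\bot$ is false. Fix $d \in \mathbb{N}$ and disjoint vectors $\vec{x},\vec{x}' \in \mathcal{V}^d$ of pairwise different variables. A formula $\psi$ induces the relation $\vec s \longrightarrow_\psi \vec t$ on $\mathcal{C}_\mathcal{A}^d$ iff $\psi[\vec x/\vec s, \vec x'/\vec t]$ is satisfiable. $\mathcal{L} \supseteq \{\mathsf{init},\mathsf{err}\}$ is a finite set of locations; a configuration is $\ell(\vec s)$ with $\ell \in \mathcal{L}$, $\vec s \in \mathcal{C}_\mathcal{A}^d$.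 Transitions. A transition $\tau = \ell \to \ell' [\psi]$ is a triple $(\ell,\psi,\ell')$ with $\psi \in \mathsf{QF}(\Sigma_\mathcal{A})$, $\ell \neq \mathsf{err}$, $\ell' \neq \mathsf{init}$; $\mathsf{cond}(\tau) := \psi$; it induces $\ell(\vec s) \longrightarrow_\tau \ell'(\vec t)$ iff $\vec s \longrightarrow_\psi \vec t$. $\tau$ is recursive if $\ell = \ell'$, conjunctive if $\psi \in \mathsf{QF}_\land(\Sigma_\mathcal{A})$, initial if $\ell = \mathsf{init}$, safe if $\ell' \neq \mathsf{err}$. $(\ell \to \ell'[\psi])|_{\psi'} := \ell \to \ell'[\psi']$. A transition system (TS) is a finite set $\mathcal{T}$ of transitions, with $\longrightarrow_\mathcal{T} := \bigcup_{\tau \in \mathcal{T}} \longrightarrow_\tau$. Chaining: $\mathsf{chain}(\ell_s \to \ell_t[\psi], \ell_s' \to \ell_t'[\psi']) := \ell_s \to \ell_t'[\psi_c]$ where $\psi_c := \psi[\vec x'/\vec x''] \land \psi'[\vec x/\vec x'']$ for fresh $\vec x''$ if $\ell_t = \ell_s'$ and $\psi_c := \bot$ otherwise; $\mathsf{chain}([\tau]) := \tau$, $\mathsf{chain}([\tau_1,\tau_2]::\vec\tau) := \mathsf{chain}(\mathsf{chain}(\tau_1,\tau_2)::\vec\tau)$. All notions for transitions (condition, recursive, safe, $\longrightarrow$, etc.) are lifted to non-empty finite sequences via $\mathsf{chain}$. A finite run is $\tau::\vec\tau \in \mathcal{T}^+$ with $\tau$ initial and $\mathsf{cond}(\tau::\vec\tau)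 \not\equiv_\mathcal{A} \bot$. An infinite run is $\vec\tau \in \mathcal{T}^\omega$ such that some $\sigma$ satisfies $\mathsf{cond}(\vec\tau')$ for every finite prefix $\vec\tau'$ of $\vec \tau$. $\mathcal{T}$ is terminating if no infinite run exists. Syntactic implicants. For $\sigma \models_\mathcal{A} \psi$: $\mathsf{sip}(\psi,\sigma) := \bigwedge\{\pi \text{ literal of } \psi \mid \sigma \models_\mathcal{A} \pi\}$; $\mathsf{sip}(\psi) := \{\mathsf{sip}(\psi,\sigma) \mid \sigma \models_\mathcal{A} \psi\}$; $\mathsf{sip}(\tau) := \{\tau|_\psi \mid \psi \in \mathsf{sip}(\mathsf{cond}(\tau))\}$; $\mathsf{sip}(\mathcal{T}) := \bigcup_{\tau\in\mathcal{T}} \mathsf{sip}(\tau)$. Redundancy. $\tau \sqsubseteq \tau'$ ($\tau \sqsubset \tau'$) iff $\longrightarrow_\tau \subseteq \longrightarrow_{\tau'}$ (resp. $\subset$); for a set $\mathcal{S}$ of transitions, $\tau \sqsubseteq \mathcal{S}$ ($\tau \sqsubset \mathcal{S}$) iff $\tau \sqsubseteq \tau'$ ($\tau \sqsubset \tau'$) for some $\tau' \in \mathcal{S}$. Acceleration. An acceleration technique is a function $\mathsf{accel}: \mathsf{QF}_\land(\Sigma_\mathcal{A}) \to \mathsf{QF}_\land(\Sigma_{\mathcal{A}'})$ (for some first-order theory $\mathcal{A}'$) with $\longrightarrow_\psi^+ = \longrightarrow_{\mathsf{accel}(\psi)}$; for a recursive conjunctive transition $\tau$, $\mathsf{accel}(\tau)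 := \tau|_{\mathsf{accel}(\mathsf{cond}(\tau))}$. Certificates. For a recursive $\tau = \ell \to \ell[\ldots]$, a satisfiable formula $\psi$ certifies non-termination of $\tau$, written $\psi \models^\infty_\mathcal{A} \tau$, if for every model $\sigma$ of $\psi$ there is an infinite sequence $\ell(\sigma(\vec x)) = s_1 \longrightarrow_\tau s_2 \longrightarrow_\tau \cdots$. ADCL-NT. A state is a triple $(\mathcal{S},[\tau_i]_{i=1}^k,[B_i]_{i=0}^k)$ with $\mathcal{S} \supseteq \mathcal{T}$ a TS, $\bigcup_i B_i \subseteq \mathsf{sip}(\mathcal{S})$, $[\tau_i]_{i=1}^k \in \mathsf{sip}(\mathcal{S})^*$ (the trace). A transition $\tau_{k+1}$ with $\tau_{k+1} \sqsubseteq B_k$ is blocked; $\tau_{k+1} \not\sqsubseteq B_k$ is active if $\mathsf{chain}([\tau_i]_{i=1}^{k+1})$ is initial with satisfiable condition. $\mathsf{bt}(\mathcal{S},[\tau_i]_{i=1}^k,[B_0,\ldots,B_k]) := (\mathcal{S},[\tau_i]_{i=1}^{k-1},[B_0,\ldots,B_{k-2},B_{k-1}\cup\{\tau_k\}])$. The relation $\leadsto_\mathsf{nt}$ is given by the rules ($::$ is concatenation): Init: $\mathcal{T} \leadsto_\mathsf{nt} (\mathcal{T},[],[\emptyset])$. Step: $(\mathcal{S},\vec\tau,\vec B) \leadsto_\mathsf{nt} (\mathcal{S},\vec\tau::\tau,\vec B::\emptyset)$ if $\tau \in \mathsf{sip}(\mathcal{S})$ is active. Accelerate: $(\mathcal{S},\vec\tau::\vec\tau^\circlearrowleft,\vec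 B::\vec B^\circlearrowleft) \leadsto_\mathsf{nt} (\mathcal{S}\cup\{\tau\},\vec\tau::\tau,\vec B::\{\tau\})$ if $\vec\tau^\circlearrowleft$ is recursive, $|\vec\tau^\circlearrowleft| = |\vec B^\circlearrowleft|$, and $\tau = \mathsf{accel}(\vec\tau^\circlearrowleft) \not\sqsubseteq \mathsf{sip}(\mathcal{S})$. Covered: $s = (\mathcal{S},\vec\tau::\vec\tau^\circlearrowleft,\vec B) \leadsto_\mathsf{nt} \mathsf{bt}(s)$ if $\vec\tau^\circlearrowleft$ is recursive and ($\vec\tau^\circlearrowleft \sqsubset \mathsf{sip}(\mathcal{S})$, or $\vec\tau^\circlearrowleft \sqsubseteq \mathsf{sip}(\mathcal{S})$ and $|\vec\tau^\circlearrowleft| > 1$). Backtrack: $s = (\mathcal{S},\vec\tau::\tau,\vec B) \leadsto_\mathsf{nt} \mathsf{bt}(s)$ if all transitions of $\mathsf{sip}(\mathcal{S})$ are inactive and $\tau$ is safe. Refute: $(\mathcal{S},\vec\tau,\vec B) \leadsto_\mathsf{nt} \mathsf{unsafe}$ if $\vec\tau$ is unsafe. Prove: $(\mathcal{S},[],[B]) \leadsto_\mathsf{nt} \mathsf{safe}$ if all transitions of $\mathsf{sip}(\mathcal{S})$ are inactive. Nonterm: $(\mathcal{S},\vec\tau::\vec\tau^\circlearrowleft,\vec B) \leadsto_\mathsf{nt} (\mathcal{S}\cup\{\tau\},\vec\tau::\vec\tau^\circlearrowleft,\vec B)$ if $\mathsf{chain}(\vec\tau^\circlearrowleft) = \ell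 \to \ell[\ldots]$, $\psi \models^\infty_\mathcal{A} \vec\tau^\circlearrowleft$, and $\tau = \ell \to \mathsf{err}[\psi] \not\sqsubseteq \mathsf{sip}(\mathcal{S})$. *)

(* Defs.v *)
From Stdlib Require Import List Arith PeanoNat Relations ClassicalDescription.
Import ListNotations.
Set Implicit Arguments.

(* An abstract many-sorted first-order theory A with carrier C_A.            *)
(* Variables are natural numbers (countably infinite), each with a sort;    *)
(* [fresh s n] yields a variable of sort s that is >= n (so every sort has   *)
Record theory := Theory {
  Sort : Type;
  Carrier : Type;
  sort_of : Carrier -> Sort;
  var_sort : nat -> Sort;
  fresh : Sort -> nat -> nat;
  fresh_ge : forall s n, n <= fresh s n;
  fresh_sort : forall s n, var_sort (fresh s n) = s;
  Model : Type;
  Lit : Type;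
  lit_vars : Lit -> list nat;
  lit_rename : (nat -> nat) -> Lit -> Lit;
  lit_sat : Model -> (nat -> Carrier) -> Lit -> Prop;
  lit_sat_rename : forall M (a : nat -> Carrier) f l,
      (forall v, sort_of (a v) = var_sort v) ->
      (forall v, var_sort (f v) = var_sort v) ->
      (lit_sat M a (lit_rename f l) <-> lit_sat M (fun v => a (f v)) l);
  lit_sat_coinc : forall M (a b : nat -> Carrier) l,
      (forall v, sort_of (a v) = var_sort v) ->
      (forall v, sort_of (b v) = var_sort v) ->
      (forall v, In v (lit_vars l) -> a v = b v) ->
      (lit_sat M a l <-> lit_sat M b l)
}.

Definition well_sorted (A : theory) (a : nat -> Carrier A) : Prop :=
  forall v, sort_of A (a v) = var_sort A v.

(* Quantifier-free formulas in negation normal form *)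
Inductive qf (L : Type) : Type :=
| QLit (l : L)
| QTop
| QBot
| QAnd (p q : qf L)
| QOr (p q : qf L).
Arguments QTop {L}.
Arguments QBot {L}.

Section Formulas.
Context (A : theory).

Fixpoint qsat (M : Model A) (a : nat -> Carrier A) (p : qf (Lit A)) : Prop :=
  match p with
  | QLit l => lit_sat A M a l
  | QTop => True
  | QBot => False
  | QAnd p q => qsat M a p /\ qsat M a q
  | QOr p q => qsat M a p \/ qsat M a q
  end.

Fixpoint qlits (p : qf (Lit A)) : list (Lit A) :=
  match p with
  | QLit l => [l]
  | QTop | QBot => []
  | QAnd p q | QOr p q => qlits p ++ qlits q
  end.

Fixpoint qvars (p : qf (Lit A)) : list nat :=
  match p with
  | QLit l => lit_vars A l
  | QTop | QBot => []
  | QAnd p q | QOr p q => qvars p ++ qvars q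
  end.

Fixpoint qrename (f : nat -> nat) (p : qf (Lit A)) : qf (Lit A) :=
  match p with
  | QLit l => QLit (lit_rename A f l)
  | QTop => QTop
  | QBot => QBot
  | QAnd p q => QAnd (qrename f p) (qrename f q)
  | QOr p q => QOr (qrename f p) (qrename f q)
  end.

Fixpoint conjunctive (p : qf (Lit A)) : Prop :=
  match p with
  | QLit _ | QTop => True
  | QAnd p q => conjunctive p /\ conjunctive q
  | _ => False
  end.

Definition conj_of (ls : list (Lit A)) : qf (Lit A) :=
  fold_right (fun l acc => QAnd (QLit l) acc) QTop ls.

Definition satisfiable (p : qf (Lit A)) : Prop :=
  exists M a, well_sorted A a /\ qsat M a p.

Definition sip_at (p : qf (Lit A)) (M : Model A) (a : nat -> Carrier A) : qf (Lit A) :=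
  conj_of (filter (fun l => if excluded_middle_informative (lit_sat A M a l)
                            then true else false) (qlits p)).

Definition in_sip_formula (p phi : qf (Lit A)) : Prop :=
  exists M a, well_sorted A a /\ qsat M a p /\ phi = sip_at p M a.

End Formulas.
Arguments qsat {A} M a p.
Arguments qlits {A} p.
Arguments qvars {A} p.
Arguments qrename {A} f p.
Arguments conjunctive {A} p.
Arguments conj_of {A} ls.
Arguments satisfiable {A} p.
Arguments sip_at {A} p M a.
Arguments in_sip_formula {A} p phi.

Record setting := Setting {
  th : theory;
  Loc : Type;
  init : Loc;
  err : Loc;
  xs : list nat;
  xs' : list nat
}.

Record trans (P : setting) := Trans {
  src : Loc P;
  cond : qf (Lit (th P));
  tgt : Loc P
}.
Arguments Trans {P} src cond tgt.
Arguments src {P} t.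
Arguments cond {P} t.
Arguments tgt {P} t.

Section Calculus.
Context (P : setting).
Notation C := (Carrier (th P)).
Notation form := (qf (Lit (th P))).
Notation tr := (trans P).

Definition rel (p : form) (s t : list C) : Prop :=
  exists M a, well_sorted (th P) a /\
    Forall2 (fun v c => a v = c) (xs P) s /\
    Forall2 (fun v c => a v = c) (xs' P) t /\
    qsat M a p.

Definition step (t : tr) (l : Loc P) (s : list C) (l' : Loc P) (u : list C) : Prop :=
  l = src t /\ l' = tgt t /\ rel (cond t) s u.

Definition restrict (t : tr) (p : form) : tr := Trans (src t) p (tgt t).

(* chaining, with a fixed choice of fresh variables x'' *)
Fixpoint fresh_list (n : nat) (vs : list nat) : list nat :=
  match vs with
  | [] => []
  | v :: vs => let w := fresh (th P) (var_sort (th P) v) n in w :: fresh_list (S w) vs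
  end.

Fixpoint lookup (ks ws : list nat) (v : nat) : nat :=
  match ks, ws with
  | k :: ks, w :: ws => if Nat.eqb v k then w else lookup ks ws v
  | _, _ => v
  end.

Definition chain2 (t t' : tr) : tr :=
  if excluded_middle_informative (tgt t = src t') then
    let N := S (list_max (qvars (cond t) ++ qvars (cond t') ++ xs P ++ xs' P)) in
    let xs'' := fresh_list N (xs' P) in
    Trans (src t)
      (QAnd (qrename (lookup (xs' P) xs'') (cond t))
            (qrename (lookup (xs P) xs'') (cond t')))
      (tgt t')
  else Trans (src t) QBot (tgt t').

Definition chainl (ts : list tr) : option tr :=
  match ts with
  | [] => None
  | t :: ts => Some (fold_left chain2 ts t)
  end.

Definition recursive_seq (ts : list tr) : Prop :=
  exists c, chainl ts = Some c /\ src c = tgt c.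

Definition sqsub (t t' : tr) : Prop :=
  forall l s l' u, step t l s l' u -> step t' l s l' u.
Definition sqsub_strict (t t' : tr) : Prop := sqsub t t' /\ ~ sqsub t' t.
Definition sqsub_set (t : tr) (S : tr -> Prop) : Prop := exists t', S t' /\ sqsub t t'.
Definition sqsub_strict_set (t : tr) (S : tr -> Prop) : Prop :=
  exists t', S t' /\ sqsub_strict t t'.

Definition in_sip (S : list tr) (t : tr) : Prop :=
  exists t0, In t0 S /\ exists phi, in_sip_formula (cond t0) phi /\ t = restrict t0 phi.

Definition is_accel (accel : form -> form) : Prop :=
  forall p, conjunctive p ->
    conjunctive (accel p) /\
    forall s u, rel (accel p) s u <-> clos_trans _ (rel p) s u.

Definition certifies (p : form) (t : tr) : Prop :=
  satisfiable p /\
  forall M a, well_sorted (th P) a -> qsat M a p ->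
    exists f : nat -> list C,
      f 0 = map a (xs P) /\
      forall n, step t (src t) (f n) (src t) (f (S n)).

(* blocked / active, relative to trace [ts] and blocking sets [Bs] = B_0..B_k *)
Definition active (ts : list tr) (Bs : list (list tr)) (t : tr) : Prop :=
  ~ sqsub_set t (fun t' => In t' (last Bs [])) /\
  exists c, chainl (ts ++ [t]) = Some c /\ src c = init P /\ satisfiable (cond c).

Inductive nt_state :=
| NTS (T : list tr)
| NState (S : list tr) (ts : list tr) (Bs : list (list tr))
| NUnsafe
| NSafe.

Inductive nt_step (accel : form -> form) : nt_state -> nt_state -> Prop :=
| R_init : forall T, nt_step accel (NTS T) (NState T [] [[]])
| R_step : forall S ts Bs t,
    in_sip S t -> active ts Bs t ->
    nt_step accel (NState S ts Bs) (NState S (ts ++ [t]) (Bs ++ [[]]))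
| R_accelerate : forall S ts cyc Bs Bc c t,
    length cyc = length Bc ->
    chainl cyc = Some c -> src c = tgt c ->
    conjunctive (cond c) ->
    t = restrict c (accel (cond c)) ->
    ~ sqsub_set t (in_sip S) ->
    nt_step accel (NState S (ts ++ cyc) (Bs ++ Bc)) (NState (t :: S) (ts ++ [t]) (Bs ++ [[t]]))
| R_covered : forall S ts0 t Bs0 b1 b2 pre cyc c,
    ts0 ++ [t] = pre ++ cyc ->
    chainl cyc = Some c -> src c = tgt c ->
    (sqsub_strict_set c (in_sip S) \/ (sqsub_set c (in_sip S) /\ 1 < length cyc)) ->
    nt_step accel (NState S (ts0 ++ [t]) (Bs0 ++ [b1; b2]))
                  (NState S ts0 (Bs0 ++ [t :: b1]))
| R_backtrack : forall S ts0 t Bs0 b1 b2,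
    (forall t', in_sip S t' -> ~ active (ts0 ++ [t]) (Bs0 ++ [b1; b2]) t') ->
    tgt t <> err P ->
    nt_step accel (NState S (ts0 ++ [t]) (Bs0 ++ [b1; b2]))
                  (NState S ts0 (Bs0 ++ [t :: b1]))
| R_refute : forall S ts Bs c,
    chainl ts = Some c -> tgt c = err P ->
    nt_step accel (NState S ts Bs) NUnsafe
| R_prove : forall S b,
    (forall t', in_sip S t' -> ~ active [] [b] t') ->
    nt_step accel (NState S [] [b]) NSafe
| R_nonterm : forall S ts cyc Bs c p t,
    chainl cyc = Some c -> src c = tgt c ->
    certifies p c ->
    t = Trans (src c) p (err P) ->
    ~ sqsub_set t (in_sip S) ->
    nt_step accel (NState S (ts ++ cyc) Bs) (NState (t :: S) (ts ++ cyc) Bs).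

Definition nonterminating (T : list tr) : Prop :=
  exists (tau : nat -> tr) (s : nat -> list C),
    (forall n, In (tau n) T) /\
    src (tau 0) = init P /\
    (forall n, tgt (tau n) = src (tau (S n))) /\
    (forall n, rel (cond (tau n)) (s n) (s (S n))).

End Calculus.
Arguments rel {P} p s t.
Arguments step {P} t l s l' u.
Arguments chainl {P} ts.
Arguments is_accel {P} accel.
Arguments nt_step {P} accel _ _.
Arguments nonterminating {P} T.
Arguments NTS {P} T.
Arguments NUnsafe {P}.

(* Main.v *)
Require Import Defs.
From Stdlib Require Import List Relations Arith PeanoNat ClassicalEpsilon ClassicalDescription.
Import ListNotations.

Section Sem.
Context (P : setting).
Notation C := (Carrier (th P)).
Notation form := (qf (Lit (th P))).
Notation tr := (trans P).

Lemma qsat_rename M (a : nat -> C) f p :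
  well_sorted (th P) a -> (forall v, var_sort (th P) (f v) = var_sort (th P) v) ->
  (qsat M a (qrename f p) <-> qsat M (fun v => a (f v)) p).
Proof.
  intros Ha Hf; induction p; simpl; try tauto.
  apply lit_sat_rename; auto.
Qed.

Lemma qsat_mono (M : Model (th P)) (a : nat -> C) (M' : Model (th P)) (a' : nat -> C) p :
  qsat M a p -> (forall l, In l (qlits p) -> lit_sat (th P) M a l -> lit_sat (th P) M' a' l) ->
  qsat M' a' p.
Proof.
  induction p; simpl; intros H1 H2; auto.
  - destruct H1; split; [apply IHp1|apply IHp2]; auto;
      intros; apply H2; auto using in_or_app.
  - destruct H1; [left; apply IHp1|right; apply IHp2]; auto;
      intros; apply H2; auto using in_or_app.
Qed.

Lemma qsat_conj_of (M : Model (th P)) (a : nat -> C) ls : qsat M a (conj_of ls) -> forall l, In l ls -> lit_sat (th P) M a l.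
Proof.
  induction ls; simpl; intros H l Hl; [contradiction|].
  destruct H, Hl; subst; auto.
Qed.

Lemma sip_sound p (M : Model (th P)) (a : nat -> C) (M' : Model (th P)) (a' : nat -> C) :
  qsat M a p -> qsat M' a' (sip_at p M a) -> qsat M' a' p.
Proof.
  intros H1 H2. apply (qsat_mono M a); auto.
  intros l Hl Hs. apply (qsat_conj_of _ _ _ H2).
  apply filter_In; split; auto.
  destruct (excluded_middle_informative _); tauto.
Qed.

Lemma forall2_map (a : nat -> C) vs l : Forall2 (fun v c => a v = c) vs l <-> l = map a vs.
Proof.
  split.
  - induction 1; simpl; subst; auto.
  - intros ->; induction vs; simpl; constructor; auto.
Qed.

Lemma lookup_notin ks ws v : ~ In v ks -> lookup ks ws v = v.
Proof.
  revert ws; induction ks; intros [|w ws] H; simpl; auto.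
  destruct (Nat.eqb_spec v a); [exfalso; apply H; left; auto|].
  apply IHks; intro; apply H; right; auto.
Qed.

Lemma lookup_map ks ws : NoDup ks -> length ks = length ws -> map (lookup ks ws) ks = ws.
Proof.
  revert ws; induction ks; intros [|w ws] Hn Hl; simpl in *; try discriminate; auto.
  inversion Hn; subst. rewrite Nat.eqb_refl. f_equal.
  rewrite <- (IHks ws) at 1; auto.
  apply map_ext_in. intros v Hv. destruct (Nat.eqb_spec v a); subst; [contradiction|auto].
Qed.

Lemma lookup_sort ks ws v :
  Forall2 (fun v w => var_sort (th P) v = var_sort (th P) w) ks ws ->
  var_sort (th P) (lookup ks ws v) = var_sort (th P) v.
Proof.
  induction 1; simpl; auto.
  destruct (Nat.eqb_spec v x); subst; auto.
Qed.

Lemma fresh_list_sort n vs :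
  Forall2 (fun v w => var_sort (th P) v = var_sort (th P) w) vs (fresh_list P n vs).
Proof.
  revert n; induction vs; simpl; constructor; auto.
  rewrite fresh_sort; auto.
Qed.

Lemma forall2_trans ks ms ws :
  Forall2 (fun v w => var_sort (th P) v = var_sort (th P) w) ks ms ->
  Forall2 (fun v w => var_sort (th P) v = var_sort (th P) w) ms ws ->
  Forall2 (fun v w => var_sort (th P) v = var_sort (th P) w) ks ws.
Proof.
  intros H; revert ws; induction H; intros ws H2; inversion H2; subst; constructor; eauto.
  congruence.
Qed.

Lemma chain2_src (t t' : tr) : src (chain2 t t') = src t.
Proof. unfold chain2; destruct (excluded_middle_informative _); reflexivity. Qed.
Lemma chain2_tgt (t t' : tr) : tgt (chain2 t t') = tgt t'.
Proof. unfold chain2; destruct (excluded_middle_informative _); reflexivity. Qed.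

Lemma nodup_dis (l l' : list nat) a : NoDup (l ++ l') -> In a l -> ~ In a l'.
Proof.
  intros H Hin. apply in_split in Hin as (l1 & l2 & ->).
  rewrite <- app_assoc in H. simpl in H. apply NoDup_remove_2 in H.
  intro; apply H; apply in_or_app; right; apply in_or_app; right; auto.
Qed.

Lemma chain2_sem (t t' : tr) s u :
  NoDup (xs P ++ xs' P) -> length (xs P) = length (xs' P) ->
  Forall2 (fun v w => var_sort (th P) v = var_sort (th P) w) (xs P) (xs' P) ->
  rel (cond (chain2 t t')) s u ->
  tgt t = src t' /\ exists m, rel (cond t) s m /\ rel (cond t') m u.
Proof.
  intros Hnd Hlen Hsrt. unfold chain2.
  destruct (excluded_middle_informative _) as [Heq|Hne];
    [|intros (M & a & _ & _ & _ & [])].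
  intro HH; split; auto. revert HH.
  generalize (S (list_max (qvars (cond t) ++ qvars (cond t') ++ xs P ++ xs' P))) as N; intro N. set (xs'' := fresh_list P N (xs' P)).
  intros (M & a & Hws & H1 & H2 & Hs1 & Hs2). simpl in Hs1, Hs2.
  assert (F1 := fresh_list_sort N (xs' P)). fold xs'' in F1.
  assert (F0 := forall2_trans _ _ _ Hsrt F1).
  assert (L1 : length (xs' P) = length xs'') by (eapply Forall2_length; eauto).
  assert (Nd1 := NoDup_app_remove_r _ _ Hnd). assert (Nd2 := NoDup_app_remove_l _ _ Hnd).
  apply (proj1 (qsat_rename M a (lookup (xs' P) xs'') (cond t) Hws (fun v => lookup_sort _ _ v F1))) in Hs1.
  apply (proj1 (qsat_rename M a (lookup (xs P) xs'') (cond t') Hws (fun v => lookup_sort _ _ v F0))) in Hs2.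
  apply forall2_map in H1, H2.
  exists (map a xs''). split.
  - exists M, (fun v => a (lookup (xs' P) xs'' v)). repeat split; auto.
    + intro v. rewrite Hws. apply lookup_sort; auto.
    + apply forall2_map. subst s. apply map_ext_in. intros v Hv.
      rewrite lookup_notin; auto. eapply nodup_dis; eauto.
    + apply forall2_map. rewrite <- (lookup_map (xs' P) xs'') at 1; auto.
      rewrite map_map; auto.
  - exists M, (fun v => a (lookup (xs P) xs'' v)). repeat split; auto.
    + intro v. rewrite Hws. apply lookup_sort; auto.
    + apply forall2_map. rewrite <- (lookup_map (xs P) xs'') at 1; auto.
      rewrite map_map; auto. congruence.
    + apply forall2_map. subst u. apply map_ext_in. intros v Hv.
      rewrite lookup_notin; auto. intro Hv'; eapply nodup_dis; eauto.
Qed.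


Section Main.
Context (T : list tr).
Context (Hnd : NoDup (xs P ++ xs' P)) (Hlen : length (xs P) = length (xs' P))
  (Hsrt : Forall2 (fun v w => var_sort (th P) v = var_sort (th P) w) (xs P) (xs' P)).
Context (accel : form -> form) (Hacc : is_accel accel).
Context (HT : forall t, In t T -> src t <> err P) (HT' : forall t, In t T -> tgt t <> err P).

Definition conf := (Loc P * list C)%type.
Definition ostep (e e' : conf) : Prop :=
  exists t, In t T /\ src t = fst e /\ tgt t = fst e' /\ rel (cond t) (snd e) (snd e').
Definition Inf (e : conf) : Prop :=
  exists Q : conf -> Prop, Q e /\ forall d, Q d -> exists d', ostep d d' /\ Q d'.
Definition Good (t : tr) : Prop :=
  src t <> err P /\
  (tgt t <> err P -> forall s u, rel (cond t) s u -> clos_trans _ ostep (src t, s) (tgt t, u)) /\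
  (tgt t = err P -> forall s u, rel (cond t) s u -> Inf (src t, s)).

Lemma Inf_R (R : conf -> Prop) :
  (forall r, R r -> exists r', R r' /\ clos_trans _ ostep r r') ->
  forall x r, R r -> clos_refl_trans _ ostep x r -> Inf x.
Proof.
  intros HR x r Hr Hx.
  exists (fun y => exists r, R r /\ clos_refl_trans_1n _ ostep y r). split.
  { exists r; split; auto. apply clos_rt_rt1n; auto. }
  intros d (r0 & Hr0 & Hd). destruct Hd as [|y0 Hdy Hy].
  - destruct (HR _ Hr0) as (r' & Hr' & Hct). apply clos_trans_t1n in Hct.
    destruct Hct as [y Hy|y z Hy Hz].
    + exists y; split; auto. exists y; split; auto. constructor.
    + exists y; split; auto. exists z; split; auto.
      apply clos_rt_rt1n. apply clos_t_clos_rt. apply clos_t1n_trans; auto.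
  - exists y0; split; auto. eexists; split; eauto.
Qed.

Lemma Inf_prefix e e' : Inf e' -> clos_trans _ ostep e e' -> Inf e.
Proof.
  intros (Q & HQ & HQs) Hct. apply (Inf_R Q) with e'; auto.
  - intros r Hr. destruct (HQs r Hr) as (r' & H1 & H2). exists r'; split; auto. constructor; auto.
  - apply clos_t_clos_rt; auto.
Qed.

Lemma Good_chain2 (t t' : tr) : Good t -> Good t' -> Good (chain2 t t').
Proof.
  intros (G1 & G2 & G3) (G1' & G2' & G3').
  unfold Good; rewrite chain2_src, chain2_tgt. split; auto. split.
  - intros Hne s u Hr. apply chain2_sem in Hr as (Heq & m & R1 & R2); auto.
    assert (tgt t <> err P) by congruence.
    apply t_trans with (tgt t, m); auto. rewrite Heq. auto.
  - intros He s u Hr. apply chain2_sem in Hr as (Heq & m & R1 & R2); auto.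
    assert (tgt t <> err P) by congruence.
    apply Inf_prefix with (tgt t, m); auto. rewrite Heq. eauto.
Qed.

Lemma Good_fold (ts : list tr) (t : tr) : Good t -> (forall x, In x ts -> Good x) -> Good (fold_left (@chain2 P) ts t).
Proof.
  revert t; induction ts; simpl; intros t Ht Hts; auto.
  apply IHts; auto. apply Good_chain2; auto.
Qed.

Lemma Good_chainl (ts : list tr) (c : tr) : chainl ts = Some c -> (forall x, In x ts -> Good x) -> Good c.
Proof.
  destruct ts; simpl; intros H Hts; inversion H; subst.
  apply Good_fold; auto.
Qed.

Lemma chainl_last (l : list tr) (t c : tr) : chainl (l ++ [t]) = Some c -> tgt c = tgt t.
Proof.
  destruct l as [|x l]; simpl; intros H; inversion H; subst; auto.
  rewrite fold_left_app. simpl. apply chain2_tgt.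
Qed.

Lemma Good_sip (S : list tr) t : (forall x, In x S -> Good x) -> in_sip S t -> Good t.
Proof.
  intros HS (t0 & Hin & phi & (M & a & Hws & Hsat & ->) & ->).
  destruct (HS t0 Hin) as (G1 & G2 & G3).
  assert (Hr : forall s u, rel (sip_at (cond t0) M a) s u -> rel (cond t0) s u).
  { intros s u (M' & a' & W & F1 & F2 & Q). exists M', a'; repeat split; auto.
    eapply sip_sound; eauto. }
  unfold Good, restrict; simpl. split; auto. split; intros; eauto.
Qed.

Lemma Good_accel (c : tr) : Good c -> src c = tgt c -> conjunctive (cond c) ->
  Good (restrict c (accel (cond c))).
Proof.
  intros (G1 & G2 & G3) Hst Hc. unfold Good, restrict; simpl.
  assert (Hne : tgt c <> err P) by congruence.
  split; auto. split; [|intros; contradiction].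
  intros _ s u Hr. apply (proj2 (Hacc _ Hc) s u) in Hr.
  induction Hr as [x y Hxy|x y z _ IH1 _ IH2].
  - apply G2; auto.
  - apply t_trans with (src c, y); auto. rewrite Hst at 2. auto.
Qed.

Lemma Good_nonterm (c : tr) (p : form) : Good c -> src c = tgt c -> certifies p c ->
  Good (Trans (src c) p (err P)).
Proof.
  intros (G1 & G2 & G3) Hst (_ & Hcert). unfold Good; simpl.
  split; auto. split; [intros H; contradiction|].
  intros _ s u (M & a & Hws & F1 & _ & Hp).
  destruct (Hcert M a Hws Hp) as (f & Hf0 & Hf).
  apply forall2_map in F1. subst s. rewrite <- Hf0.
  assert (Hne : tgt c <> err P) by congruence.
  apply (Inf_R (fun d => exists n, d = (src c, f n))) with (src c, f 0).
  - intros r (n & ->). exists (src c, f (S n)). split; eauto.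
    destruct (Hf n) as (_ & _ & Hr). rewrite Hst at 2. auto.
  - eauto.
  - apply rt_refl.
Qed.

Definition TI (ts : list tr) : Prop :=
  forall pre t post, ts = pre ++ t :: post -> tgt t = err P ->
    exists c, chainl (pre ++ [t]) = Some c /\ src c = init P /\ satisfiable (cond c).

Definition Inv (st : nt_state P) : Prop :=
  match st with
  | NTS T' => T' = T
  | NState S0 ts Bs => (forall t, In t S0 -> Good t) /\ (forall t, In t ts -> Good t) /\ TI ts
  | NUnsafe => nonterminating T
  | NSafe _ => True
  end.

Lemma Inf_nonterm (s : list C) : Inf (init P, s) -> nonterminating T.
Proof.
  intros (Q & HQ & HQs).
  assert (F : forall e : {e | Q e}, {p : tr * conf | In (fst p) T /\ src (fst p) = fst (proj1_sig e)
     /\ tgt (fst p) = fst (snd p) /\ rel (cond (fst p)) (snd (proj1_sig e)) (snd (snd p)) /\ Q (snd p)}).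
  { intros [e He]. apply constructive_indefinite_description.
    destruct (HQs e He) as (d' & (t & H1 & H2 & H3 & H4) & H5).
    exists (t, d'); simpl; auto. }
  set (next := fun e : {e | Q e} => exist Q (snd (proj1_sig (F e))) (proj2 (proj2 (proj2 (proj2 (proj2_sig (F e))))))).
  set (sq := fix sq n := match n with 0 => exist Q (init P, s) HQ | S n => next (sq n) end).
  exists (fun n => fst (proj1_sig (F (sq n)))), (fun n => snd (proj1_sig (sq n))).
  split; [|split; [|split]].
  - intros n. destruct (proj2_sig (F (sq n))) as (H1 & _). auto.
  - destruct (proj2_sig (F (sq 0))) as (_ & H2 & _). rewrite H2. reflexivity.
  - intros n. destruct (proj2_sig (F (sq n))) as (_ & _ & H3 & _).
    destruct (proj2_sig (F (sq (S n)))) as (_ & H2 & _). rewrite H3, H2. reflexivity.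
  - intros n. destruct (proj2_sig (F (sq n))) as (_ & _ & _ & H4 & _). exact H4.
Qed.


Lemma split_last (ts pre post : list tr) (t t' : tr) :
  ts ++ [t] = pre ++ t' :: post ->
  (post = [] /\ ts = pre /\ t = t') \/ (exists q, post = q ++ [t] /\ ts = pre ++ t' :: q).
Proof.
  destruct post as [|x q _] using rev_ind; intros H.
  - left. apply app_inj_tail in H as [-> ->]; auto.
  - right. rewrite app_comm_cons, app_assoc in H. apply app_inj_tail in H as [-> ->].
    exists q; auto.
Qed.

Lemma Good_T t : In t T -> Good t.
Proof.
  intros Hin. split; [apply HT; auto|split].
  - intros _ s u Hr. apply t_step. exists t; auto.
  - intros He; exfalso; apply (HT' t); auto.
Qed.

Lemma in_app_l (l l' : list tr) x : In x l -> In x (l ++ l').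
Proof. intros; apply in_or_app; auto. Qed.
Lemma in_app_r (l l' : list tr) x : In x l' -> In x (l ++ l').
Proof. intros; apply in_or_app; auto. Qed.

Lemma Inv_step st st' : nt_step accel st st' -> Inv st -> Inv st'.
Proof.
  destruct 1; simpl.
  - intros ->. split; [|split].
    + apply Good_T.
    + intros t [].
    + intros pre t post Heq. exfalso; eapply app_cons_not_nil; eauto.
  - intros (HS & Hts & HTI). split; [auto|split].
    + intros x Hx. apply in_app_or in Hx as [Hx|[<-|[]]]; auto.
      apply (Good_sip S); auto.
    + intros pre t' post Heq He. apply split_last in Heq as [(-> & <- & <-)|(q & -> & ->)].
      * destruct H0 as (_ & c & H1 & H2 & H3). eauto.
      * eapply HTI; eauto.
  - intros (HS & Hts & HTI).
    assert (Gc : Good c) by (eapply Good_chainl; eauto; intros; apply Hts, in_app_r; auto).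
    assert (Gt : Good t) by (subst t; apply Good_accel; auto).
    split; [|split].
    + intros x [<-|Hx]; auto.
    + intros x Hx. apply in_app_or in Hx as [Hx|[<-|[]]]; auto. apply Hts, in_app_l; auto.
    + intros pre t' post Heq He. apply split_last in Heq as [(-> & <- & <-)|(q & -> & ->)].
      * exfalso. subst t. unfold restrict in He; simpl in He. destruct Gc as (G1 & _).
        congruence.
      * apply (HTI pre t' (q ++ cyc)); auto. rewrite <- app_assoc; reflexivity.
  - intros (HS & Hts & HTI). split; [auto|split].
    + intros x Hx; apply Hts; apply in_app_l; auto.
    + intros pr t' post -> He. apply (HTI pr t' (post ++ [t])); auto.
      rewrite <- app_assoc; reflexivity.
  - intros (HS & Hts & HTI). split; [auto|split].
    + intros x Hx; apply Hts; apply in_app_l; auto.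
    + intros pre t' post -> He. apply (HTI pre t' (post ++ [t])); auto.
      rewrite <- app_assoc; reflexivity.
  - intros (HS & Hts & HTI).
    destruct ts as [|t0 ts0] eqn:E; [discriminate|]. rewrite <- E in *.
    assert (Hne : ts <> []) by (subst; discriminate).
    destruct (exists_last Hne) as (pre & t & Ept).
    assert (Gc : Good c) by (eapply Good_chainl; eauto).
    rewrite Ept in H. assert (Ht := chainl_last _ _ _ H).
    destruct (HTI pre t [] Ept) as (c' & H1 & H2 & (M & a & Hws & Hsat)); [congruence|].
    rewrite H in H1; inversion H1; subst c'.
    destruct Gc as (_ & _ & G3).
    assert (Hr : rel (cond c) (map a (xs P)) (map a (xs' P))).
    { exists M, a; repeat split; auto; apply forall2_map; auto. }
    specialize (G3 H0 _ _ Hr). rewrite H2 in G3.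
    eapply Inf_nonterm; eauto.
  - auto.
  - intros (HS & Hts & HTI).
    assert (Gc : Good c) by (eapply Good_chainl; eauto; intros; apply Hts, in_app_r; auto).
    assert (Gt : Good t) by (subst t; apply Good_nonterm; auto).
    split; [|split]; auto.
    intros x [<-|Hx]; auto.
Qed.

Lemma Inv_rt st st' : clos_refl_trans _ (nt_step accel) st st' -> Inv st -> Inv st'.
Proof.
  intros H; apply clos_rt_rt1n in H. induction H; auto.
  intros; apply IHclos_refl_trans_1n; eapply Inv_step; eauto.
Qed.

End Main.
End Sem.

Theorem theorem2 (P : setting) (accel : qf (Lit (th P)) -> qf (Lit (th P)))
  (T : list (trans P)) :
  init P <> err P ->
  (exists locs : list (Loc P), forall l, In l locs) ->
  NoDup (xs P ++ xs' P) ->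
  length (xs P) = length (xs' P) ->
  Forall2 (fun v w => var_sort (th P) v = var_sort (th P) w) (xs P) (xs' P) ->
  is_accel accel ->
  (forall t, In t T -> src t <> err P /\ tgt t <> init P) ->
  (forall t, In t T -> tgt t <> err P) ->
  clos_refl_trans _ (nt_step accel) (NTS T) NUnsafe ->
  nonterminating T.
Proof.
  intros _ _ Hnd Hlen Hsrt Hacc HT HT' H.
  apply (Inv_rt P T Hnd Hlen Hsrt accel Hacc) in H; auto.
  - intros t Ht; apply HT; auto.
  - simpl; reflexivity.
Qed.
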